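(* Let $X$ be a real Hilbert space and $T\colon X\to X$ averaged nonexpansive with $\operatorname{Fix}T\ne\varnothing$. Suppose that for every $\rho>0$ there exists $\theta<1$ such that for every $x$ with $\|x\|\le\rho$ there is $y\in\operatorname{Fix}T$ with $\langle x-y,Tx-y\rangle\le\theta\|x-y\|\,\|Tx-y\|$. Then $T$ is boundedly linearly regular; moreover, if $\theta$ can be chosen independently of $\rho$, then $T$ is linearly regular.
   Context: $T$ is averaged nonexpansive if $T=(1-\lambda)\mathrm{Id}+\lambda N$ with $\lambda\in[0,1[$ and $N$ nonexpansive. $T$ is linearly regular if there is $\kappa\ge0$ with $d_{\operatorname{Fix}T}(x)\le\kappa\|x-Tx\|$ for all $x\in X$; boundedly linearly regular if for each $\rho>0$ there is $\kappa\ge0$ with this inequality for all $\|x\|\le\rho$. *)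

(* Defs.v *)
From Stdlib Require Import Reals.
Open Scope R_scope.

Record HilbertSpace := {
  hcar :> Type;
  hzero : hcar;
  hadd : hcar -> hcar -> hcar;
  hopp : hcar -> hcar;
  hscal : R -> hcar -> hcar;
  hinner : hcar -> hcar -> R;
  hadd_assoc : forall x y z, hadd x (hadd y z) = hadd (hadd x y) z;
  hadd_comm : forall x y, hadd x y = hadd y x;
  hadd_zero : forall x, hadd x hzero = x;
  hadd_opp : forall x, hadd x (hopp x) = hzero;
  hscal_one : forall x, hscal 1 x = x;
  hscal_assoc : forall a b x, hscal a (hscal b x) = hscal (a * b) x;
  hscal_distr_l : forall a x y, hscal a (hadd x y) = hadd (hscal a x) (hscal a y);
  hscal_distr_r : forall a b x, hscal (a + b) x = hadd (hscal a x) (hscal b x);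
  hinner_sym : forall x y, hinner x y = hinner y x;
  hinner_add_l : forall x y z, hinner (hadd x y) z = hinner x z + hinner y z;
  hinner_scal_l : forall a x y, hinner (hscal a x) y = a * hinner x y;
  hinner_pos : forall x, 0 <= hinner x x;
  hinner_def : forall x, hinner x x = 0 -> x = hzero;
  hcomplete : forall u : nat -> hcar,
    (forall eps, 0 < eps -> exists N, forall m n, (N <= m)%nat -> (N <= n)%nat ->
        sqrt (hinner (hadd (u m) (hopp (u n))) (hadd (u m) (hopp (u n)))) < eps) ->
    exists l, forall eps, 0 < eps -> exists N, forall n, (N <= n)%nat ->
        sqrt (hinner (hadd (u n) (hopp l)) (hadd (u n) (hopp l))) < eps
}.

Arguments hzero {_}.
Arguments hadd {_}.
Arguments hopp {_}.
Arguments hscal {_}.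
Arguments hinner {_}.

Definition hsub {X : HilbertSpace} (x y : X) : X := hadd x (hopp y).
Definition hnorm {X : HilbertSpace} (x : X) : R := sqrt (hinner x x).

Definition Fix {X : HilbertSpace} (T : X -> X) : X -> Prop := fun x => T x = x.

Definition nonexpansive {X : HilbertSpace} (N : X -> X) : Prop :=
  forall x y, hnorm (hsub (N x) (N y)) <= hnorm (hsub x y).

Definition averaged_nonexpansive {X : HilbertSpace} (T : X -> X) : Prop :=
  exists (lam : R) (N : X -> X), 0 <= lam /\ lam < 1 /\ nonexpansive N /\
    forall x, T x = hadd (hscal (1 - lam) x) (hscal lam (N x)).

Definition is_dist {X : HilbertSpace} (C : X -> Prop) (x : X) (d : R) : Prop :=
  (forall y, C y -> d <= hnorm (hsub x y)) /\
  (forall b, (forall y, C y -> b <= hnorm (hsub x y)) -> b <= d).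

Definition linearly_regular {X : HilbertSpace} (T : X -> X) : Prop :=
  exists kappa, 0 <= kappa /\
    forall x d, is_dist (Fix T) x d -> d <= kappa * hnorm (hsub x (T x)).

Definition boundedly_linearly_regular {X : HilbertSpace} (T : X -> X) : Prop :=
  forall rho, 0 < rho -> exists kappa, 0 <= kappa /\
    forall x d, hnorm x <= rho -> is_dist (Fix T) x d ->
      d <= kappa * hnorm (hsub x (T x)).

(* Main.v *)
Require Import Defs.
From Stdlib Require Import Reals Lra Psatz.
Open Scope R_scope.

Lemma hinner_zero_l (X : HilbertSpace) (z : X) : hinner hzero z = 0.
Proof.
  pose proof (hinner_add_l X hzero hzero z) as H.
  rewrite hadd_zero in H. lra.
Qed.

Lemma hinner_opp_l (X : HilbertSpace) (x z : X) : hinner (hopp x) z = - hinner x z.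
Proof.
  pose proof (hinner_add_l X x (hopp x) z) as H.
  rewrite hadd_opp, hinner_zero_l in H. lra.
Qed.

Lemma hinner_sub_l (X : HilbertSpace) (x y z : X) :
  hinner (hsub x y) z = hinner x z - hinner y z.
Proof. unfold hsub. rewrite hinner_add_l, hinner_opp_l. lra. Qed.

Lemma hinner_sub_r (X : HilbertSpace) (x y z : X) :
  hinner z (hsub x y) = hinner z x - hinner z y.
Proof. rewrite hinner_sym, hinner_sub_l, (hinner_sym X x), (hinner_sym X y). lra. Qed.

Lemma hnorm_sq (X : HilbertSpace) (x : X) : hnorm x * hnorm x = hinner x x.
Proof. unfold hnorm. apply sqrt_sqrt, hinner_pos. Qed.

Lemma hnorm_pos (X : HilbertSpace) (x : X) : 0 <= hnorm x.
Proof. unfold hnorm. apply sqrt_pos. Qed.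

Lemma key (A B C ip t : R) : 0 <= A -> 0 <= B -> 0 <= C -> 0 <= t -> t < 1 ->
  ip <= t * A * B -> C * C = A * A + B * B - 2 * ip -> A * (1 - t) <= C.
Proof.
  intros. destruct (Rle_lt_dec (A * (1 - t)) C) as [h|h]; auto.
  exfalso.
  assert (h0 : 0 <= t * ((A - B) * (A - B)) + (1 - t) * (B * B)).
  { pose proof (Rle_0_sqr (A - B)). pose proof (Rle_0_sqr B). unfold Rsqr in *.
    apply Rplus_le_le_0_compat; apply Rmult_le_pos; lra. }
  assert (e : t * ((A - B) * (A - B)) + (1 - t) * (B * B) = A*A+B*B-2*(t*A*B) - (1-t)*(A*A)) by ring.
  assert (h1 : C * C >= (1 - t) * (A * A)) by lra.
  assert (h2 : C * C < (A * (1 - t)) * (A * (1 - t))).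
  { apply Rle_lt_trans with (C * (A * (1 - t))). apply Rmult_le_compat_l; lra.
    apply Rmult_lt_compat_r; nra. }
  nra.
Qed.

Lemma core (X : HilbertSpace) (T : X -> X) (theta : R) (x y : X) (d : R) :
  theta < 1 -> Fix T y ->
  hinner (hsub x y) (hsub (T x) y) <= theta * hnorm (hsub x y) * hnorm (hsub (T x) y) ->
  is_dist (Fix T) x d ->
  d <= / (1 - Rmax theta 0) * hnorm (hsub x (T x)).
Proof.
  intros Ht Hy Hi [Hd _].
  pose proof (Hd y Hy) as Hdy.
  set (t := Rmax theta 0).
  assert (t0 : 0 <= t) by apply Rmax_r.
  assert (t1 : t < 1) by (unfold t; apply Rmax_lub_lt; lra).
  set (A := hnorm (hsub x y)). set (B := hnorm (hsub (T x) y)).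
  set (C := hnorm (hsub x (T x))).
  assert (HA := hnorm_pos X (hsub x y)). assert (HB := hnorm_pos X (hsub (T x) y)).
  assert (HC := hnorm_pos X (hsub x (T x))).
  fold A in HA, Hdy, Hi. fold B in HB, Hi. fold C in HC.
  assert (Hi' : hinner (hsub x y) (hsub (T x) y) <= t * A * B).
  { assert (theta <= t) by apply Rmax_l.
    assert (0 <= A * B) by nra. nra. }
  assert (Heq : C * C = A * A + B * B - 2 * hinner (hsub x y) (hsub (T x) y)).
  { unfold A, B, C. rewrite !hnorm_sq. rewrite !hinner_sub_l, !hinner_sub_r.
    rewrite (hinner_sym X (T x) x), (hinner_sym X y x), (hinner_sym X y (T x)). lra. }
  pose proof (key A B C _ t HA HB HC t0 t1 Hi' Heq) as K.
  apply Rle_trans with A; auto.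
  apply Rmult_le_reg_l with (1 - t). lra.
  rewrite <- Rmult_assoc, Rinv_r by lra. lra.
Qed.

Theorem lemma3p5 (X : HilbertSpace) (T : X -> X) :
  averaged_nonexpansive T ->
  (exists z, Fix T z) ->
  (forall rho, 0 < rho -> exists theta, theta < 1 /\
     forall x : X, hnorm x <= rho -> exists y, Fix T y /\
       hinner (hsub x y) (hsub (T x) y) <= theta * hnorm (hsub x y) * hnorm (hsub (T x) y)) ->
  boundedly_linearly_regular T /\
  ((exists theta, theta < 1 /\
     forall rho, 0 < rho -> forall x : X, hnorm x <= rho -> exists y, Fix T y /\
       hinner (hsub x y) (hsub (T x) y) <= theta * hnorm (hsub x y) * hnorm (hsub (T x) y)) ->
   linearly_regular T).
Proof.
  intros _ _ H. split.
  - intros rho Hr. destruct (H rho Hr) as [theta [Ht Hx]].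
    exists (/ (1 - Rmax theta 0)). split.
    + apply Rlt_le, Rinv_0_lt_compat. assert (Rmax theta 0 < 1) by (apply Rmax_lub_lt; lra). lra.
    + intros x d Hn Hd. destruct (Hx x Hn) as [y [Hy Hi]].
      eapply core; eauto.
  - intros [theta [Ht Hx]].
    exists (/ (1 - Rmax theta 0)). split.
    + apply Rlt_le, Rinv_0_lt_compat. assert (Rmax theta 0 < 1) by (apply Rmax_lub_lt; lra). lra.
    + intros x d Hd.
      assert (Hr : 0 < hnorm x + 1) by (pose proof (hnorm_pos X x); lra).
      destruct (Hx (hnorm x + 1) Hr x ltac:(lra)) as [y [Hy Hi]].
      eapply core; eauto.
Qed.
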